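(* Let $X$ be a finite discrete space with at least two elements, $\Gamma$ a nonempty countable set, $\varphi:\Gamma\to\Gamma$ any map, and $\sigma_\varphi:X^\Gamma\to X^\Gamma$ the generalized shift. Then each of the following statements is equivalent to ''$\varphi$ has at least one non-quasi-periodic point'': (a) $(X^\Gamma,\sigma_\varphi)$ is uniform distributional chaotic; (b) it is DC$^u$1; (c) it is DC$^\infty$1; (d) it is DC$^2$1; (e) it is DC$^u$2; (f) it is DC$^\infty$2; (g) it is DC$^2$2.
   Context: $X^\Gamma$ carries the product topology; it is compact metrizable, and $d$ denotes a fixed compatible metric. The generalized shift is $\sigma_\varphi((x_\alpha)_{\alpha\in\Gamma})=(x_{\varphi(\alpha)})_{\alpha\in\Gamma}$. A point $\theta\in\Gamma$ is quasi-periodic for $\varphi$ if $\{\varphi^n(\theta):n\ge0\}$ is finite (equivalently, the orbit meets the set of periodic points); otherwise it is non-quasi-periodic. For a continuous $f:Y\to Y$ on a compact metric space $(Y,d)$, $x,y\in Y$, $t\in\mathbb R$, $n\ge1$, let $\xi(x,y,t,n)=\#\{i\in\{0,\dots,n-1\}:d(f^i(x),f^i(y))<t\}$, $F_{xy}(t)=\liminf_{n\to\infty}\xi(x,y,t,n)/n$, $F^*_{xy}(t)=\limsup_{n\to\infty}\xi(x,y,t,n)/n$. A pair $x,y$ is distributional scrambled of type 1 if there is $s>0$ with $F_{xy}(s)=0$ and $F^*_{xy}(s)=1$ for all $s>0$; of type 2 if there is $s>0$ with $F_{xy}(s)<1$ and $F^*_{xy}(s)=1$ for all $s>0$. A set $A\subseteq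 Y$ with at least two elements is distributional scrambled of type $i$ if every pair of distinct points of $A$ is. $f$ is DC$^u i$ (resp. DC$^\infty i$, DC$^2 i$) if $Y$ has an uncountable (resp. infinite, resp. at least two-element) distributional scrambled set of type $i$. $(Y,f)$ is uniform distributional chaotic if there are an uncountable distributional scrambled set $A$ of type 1 and $\varepsilon>0$ with $F_{xy}(\varepsilon)=0$ for all distinct $x,y\in A$. *)

(* Defs.v *)
From Stdlib Require Import Reals List.
From Coquelicot Require Import Coquelicot.
Open Scope R_scope.

Definition finite_type (T : Type) : Prop := exists l : list T, forall x, In x l.
Definition countable_type (T : Type) : Prop :=
  exists f : T -> nat, forall a b, f a = f b -> a = b.

Definition set_finite {T : Type} (A : T -> Prop) : Prop :=
  exists l : list T, forall x, A x -> In x l.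
Definition set_infinite {T : Type} (A : T -> Prop) : Prop := ~ set_finite A.
Definition set_countable {T : Type} (A : T -> Prop) : Prop :=
  exists f : T -> nat, forall a b, A a -> A b -> f a = f b -> a = b.
Definition set_uncountable {T : Type} (A : T -> Prop) : Prop := ~ set_countable A.
Definition set_two_elements {T : Type} (A : T -> Prop) : Prop :=
  exists x y, A x /\ A y /\ x <> y.

Definition gen_shift {X G : Type} (phi : G -> G) (x : G -> X) : G -> X :=
  fun a => x (phi a).

Definition quasi_periodic {G : Type} (phi : G -> G) (theta : G) : Prop :=
  set_finite (fun g => exists n : nat, g = Nat.iter n phi theta).
Definition has_non_quasi_periodic {G : Type} (phi : G -> G) : Prop :=
  exists theta, ~ quasi_periodic phi theta.

Definition is_metric {Y : Type} (d : Y -> Y -> R) : Prop :=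
  (forall x y, 0 <= d x y) /\
  (forall x y, d x y = 0 <-> x = y) /\
  (forall x y, d x y = d y x) /\
  (forall x y z, d x z <= d x y + d y z).

(* The metric topology of d equals the product topology on G -> X
   (X discrete):
   - every d-ball around x contains a basic cylinder around x
     (finitely many coordinates fixed), and
   - every subbasic cylinder {y | y g = x g} contains a d-ball around x. *)
Definition compatible_product_metric {X G : Type} (d : (G -> X) -> (G -> X) -> R) : Prop :=
  (forall (x : G -> X) (eps : R), 0 < eps ->
     exists F : list G, forall y, (forall g, In g F -> y g = x g) -> d x y < eps) /\
  (forall (x : G -> X) (g : G),
     exists delta, 0 < delta /\ forall y, d x y < delta -> y g = x g).

Section DC.
Context {Y : Type} (d : Y -> Y -> R) (f : Y -> Y).

Fixpoint xi (x y : Y) (t : R) (n : nat) : R :=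
  match n with
  | O => 0
  | S m => xi x y t m +
           (if Rlt_dec (d (Nat.iter m f x) (Nat.iter m f y)) t then 1 else 0)
  end.

(* liminf / limsup over n >= 1 of xi(x,y,t,n)/n (sequence indexed by n+1) *)
Definition F_low (x y : Y) (t : R) : Rbar :=
  LimInf_seq (fun n => xi x y t (S n) / INR (S n)).
Definition F_up (x y : Y) (t : R) : Rbar :=
  LimSup_seq (fun n => xi x y t (S n) / INR (S n)).

Definition DC_pair1 (x y : Y) : Prop :=
  (exists s, 0 < s /\ F_low x y s = Finite 0) /\
  (forall s, 0 < s -> F_up x y s = Finite 1).
Definition DC_pair2 (x y : Y) : Prop :=
  (exists s, 0 < s /\ Rbar_lt (F_low x y s) (Finite 1)) /\
  (forall s, 0 < s -> F_up x y s = Finite 1).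

Definition DC_scrambled1 (A : Y -> Prop) : Prop :=
  set_two_elements A /\ forall x y, A x -> A y -> x <> y -> DC_pair1 x y.
Definition DC_scrambled2 (A : Y -> Prop) : Prop :=
  set_two_elements A /\ forall x y, A x -> A y -> x <> y -> DC_pair2 x y.

Definition DCu1 : Prop := exists A, set_uncountable A /\ DC_scrambled1 A.
Definition DCinf1 : Prop := exists A, set_infinite A /\ DC_scrambled1 A.
Definition DC21 : Prop := exists A, DC_scrambled1 A.
Definition DCu2 : Prop := exists A, set_uncountable A /\ DC_scrambled2 A.
Definition DCinf2 : Prop := exists A, set_infinite A /\ DC_scrambled2 A.
Definition DC22 : Prop := exists A, DC_scrambled2 A.

Definition uniform_DC : Prop :=
  exists A, set_uncountable A /\ DC_scrambled1 A /\
    exists eps, 0 < eps /\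
      forall x y, A x -> A y -> x <> y -> F_low x y eps = Finite 0.
End DC.

(* Main.v *)
Require Import Defs.
From Stdlib Require Import Reals List Arith Lia Lra Factorial.
From Stdlib Require Import Classical ClassicalEpsilon FunctionalExtensionality.
From Coquelicot Require Import Coquelicot.

Open Scope nat_scope.
Open Scope nat_scope.

Fixpoint cnt (b : nat -> bool) (n : nat) : nat :=
  match n with O => O | S m => (cnt b m + (if b m then 1 else 0))%nat end.

Lemma cnt_le b n : (cnt b n <= n)%nat.
Proof. induction n; simpl; [lia|destruct (b n); lia]. Qed.

Lemma cnt_add b m r : (cnt b m <= cnt b (m + r) <= cnt b m + r)%nat.
Proof. induction r; [rewrite Nat.add_0_r; lia|].
rewrite Nat.add_succ_r; simpl; destruct (b (m + r)); lia. Qed.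

Lemma cnt_good_run b L r : (forall i, (L <= i < L + r)%nat -> b i = true) ->
  cnt b (L + r) = (cnt b L + r)%nat.
Proof. induction r; intros H; [rewrite Nat.add_0_r; lia|].
rewrite Nat.add_succ_r; simpl. rewrite IHr by (intros; apply H; lia).
rewrite (H (L + r)%nat) by lia. lia. Qed.

Lemma cnt_bad_run b L r : (forall i, (L <= i < L + r)%nat -> b i = false) ->
  cnt b (L + r) = cnt b L.
Proof. induction r; intros H; [rewrite Nat.add_0_r; lia|].
rewrite Nat.add_succ_r; simpl. rewrite IHr by (intros; apply H; lia).
rewrite (H (L + r)%nat) by lia. lia. Qed.

Lemma cnt_good b L H n : (L <= H <= n)%nat ->
  (forall i, (L <= i < H)%nat -> b i = true) -> (H - L <= cnt b n)%nat.
Proof. intros Hr Hg.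
pose proof (cnt_good_run b L (H - L)) as E.
replace (L + (H - L))%nat with H in E by lia.
assert (E' : cnt b H = cnt b L + (H - L)) by (apply E; intros; apply Hg; lia).
pose proof (cnt_add b H (n - H)). replace (H + (n - H))%nat with n in H0 by lia. lia. Qed.

Lemma cnt_window b w p i : (w <= i < w + p)%nat -> b i = false ->
  (cnt b (w + p) + 1 <= cnt b w + p)%nat.
Proof. intros Hi Hb.
pose proof (cnt_add b w (i - w)) as A1. replace (w + (i - w))%nat with i in A1 by lia.
pose proof (cnt_add b (S i) (w + p - S i)) as A2. replace (S i + (w + p - S i))%nat with (w+p)%nat in A2 by lia.
assert (cnt b (S i) = cnt b i) by (simpl; rewrite Hb; lia). lia. Qed.

Lemma cnt_periodic b i0 p : (0 < p)%nat ->
  (forall w, (i0 <= w)%nat -> exists i, (w <= i < w + p)%nat /\ b i = false) ->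
  forall r, (p * cnt b (i0 + r) <= p * i0 + (p - 1) * (r + 1))%nat.
Proof. intros Hp Hw r. induction r as [r IH] using lt_wf_ind.
destruct (Nat.lt_ge_cases r p).
- pose proof (cnt_le b (i0 + r)). nia.
- specialize (IH (r - p)%nat ltac:(lia)).
  destruct (Hw (i0 + (r - p))%nat ltac:(lia)) as [i [Hi Hb]].
  pose proof (cnt_window b (i0 + (r - p)) p i Hi Hb).
  replace (i0 + (r - p) + p)%nat with (i0 + r)%nat in H0 by lia. nia. Qed.

Open Scope R_scope.

Lemma xi_cnt {Y} (d : Y -> Y -> R) f x y t n :
  xi d f x y t n = INR (cnt (fun i => if Rlt_dec (d (Nat.iter i f x) (Nat.iter i f y)) t then true else false) n).
Proof. induction n; simpl; [reflexivity|]. rewrite IHn.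
destruct (Rlt_dec _ t); rewrite plus_INR; simpl; ring. Qed.

Lemma iter_shift {X G} (phi : G -> G) (x : G -> X) i g :
  Nat.iter i (gen_shift phi) x g = x (Nat.iter i phi g).
Proof. revert g; induction i; intros g; [reflexivity|].
simpl. unfold gen_shift at 1. rewrite IHi. rewrite <- Nat.iter_succ_r. reflexivity. Qed.

Lemma list_below {G} (enc : G -> nat) (Hinj : forall a b, enc a = enc b -> a = b) n :
  exists l, forall g, (enc g < n)%nat -> In g l.
Proof. induction n. exists nil; intros; lia.
destruct IHn as [l Hl]. destruct (classic (exists g, enc g = n)) as [[g0 Hg0]|Hn].
- exists (g0 :: l). intros g Hg. destruct (Nat.eq_dec (enc g) n).
  + left. apply Hinj. congruence.
  + right; apply Hl; lia.
- exists l. intros g Hg. destruct (Nat.eq_dec (enc g) n). exfalso; eauto. apply Hl; lia.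
Qed.

Lemma list_bound {G} (enc : G -> nat) (l : list G) : exists K, forall g, In g l -> (enc g < K)%nat.
Proof. induction l as [|a l [K HK]]. exists O; intros g []. exists (S (Nat.max K (enc a))).
intros g [<-|Hg]; [lia|]. specialize (HK g Hg); lia. Qed.

Fixpoint pref {A} (h : nat -> A) n : list A := match n with O => nil | S m => h m :: pref h m end.

Lemma pref_in {A} (h : nat -> A) n z : In z (pref h n) -> exists i, (i < n)%nat /\ h i = z.
Proof. induction n; simpl. intros []. intros [<-|H]. exists n; split; auto.
destruct (IHn H) as [i [? ?]]. exists i; split; auto. Qed.

Lemma pref_len {A} (h : nat -> A) n : length (pref h n) = n.
Proof. induction n; simpl; auto. Qed.

Lemma pigeon {A} (h : nat -> A) (l : list A) : (forall i, In (h i) l) ->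
  exists a b, (a < b)%nat /\ h a = h b.
Proof. intros Hl. apply NNPP; intros Hn.
assert (ND : forall n, NoDup (pref h n)).
{ induction n; simpl. constructor. constructor; auto. intros Hin.
  destruct (pref_in h n _ Hin) as [i [Hi E]]. apply Hn. exists i, n; auto. }
pose proof (NoDup_incl_length (ND (S (length l))) (l' := l)).
rewrite pref_len in H. assert (incl (pref h (S (length l))) l).
{ intros z Hz. destruct (pref_in _ _ _ Hz) as [i [_ <-]]. auto. }
specialize (H H0). lia. Qed.


Close Scope R_scope.
Open Scope nat_scope.
Open Scope nat_scope.

Definition infs (S : nat -> Prop) := forall N, exists n, N <= n /\ S n.

Lemma pigeon_inf {A} (lx : list A) (S : nat -> Prop) (h : nat -> A) :
  infs S -> (forall n, S n -> In (h n) lx) -> exists c, infs (fun n => S n /\ h n = c).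
Proof. revert S; induction lx as [|c lx IH]; intros S HS Hin.
- destruct (HS 0) as [n [_ Hn]]. destruct (Hin n Hn).
- destruct (classic (infs (fun n => S n /\ h n = c))) as [Hc|Hc]. eauto.
  assert (exists N0, forall n, N0 <= n -> S n -> h n <> c) as [N0 HN0].
  { apply NNPP; intros Hne. apply Hc. intros N. apply NNPP; intros Hno.
    apply Hne. exists N. intros n Hn Sn E. apply Hno. eauto. }
  destruct (IH (fun n => S n /\ N0 <= n)) as [c' Hc'].
  + intros N. destruct (HS (Nat.max N N0)) as [n [Hn Sn]]. exists n; split; [lia|split; auto; lia].
  + intros n [Sn Hn]. destruct (Hin n Sn) as [E|]; auto. exfalso; apply (HN0 n); auto.
  + exists c'. intros N. destruct (Hc' N) as [n [Hn [[Sn _] E]]]. eauto.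
Qed.

Fixpoint Sq {X G : Type} (x0 : X) (enc : G -> nat) (u : nat -> G -> X) (k : nat) : nat -> Prop :=
  match k with
  | O => fun _ => True
  | S k' => let c := epsilon (inhabits x0)
              (fun c => infs (fun n => Sq x0 enc u k' n /\ forall g, enc g = k' -> u n g = c)) in
            fun n => Sq x0 enc u k' n /\ forall g, enc g = k' -> u n g = c
  end.

Definition cv {X G : Type} (x0 : X) (enc : G -> nat) (u : nat -> G -> X) k := epsilon (inhabits x0)
              (fun c => infs (fun n => Sq x0 enc u k n /\ forall g, enc g = k -> u n g = c)).

Lemma Sq_S {X G : Type} (x0 : X) (enc : G -> nat) (u : nat -> G -> X) k n :
  Sq x0 enc u (S k) n <-> Sq x0 enc u k n /\ forall g, enc g = k -> u n g = cv x0 enc u k.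
Proof. reflexivity. Qed.

Lemma Sq_inf (X G : Type) (lx : list X) (Hlx : forall a : X, In a lx) (x0 : X)
  (enc : G -> nat) (Hinj : forall a b, enc a = enc b -> a = b) (u : nat -> G -> X) k : infs (Sq x0 enc u k).
Proof. induction k. intros N; exists N; split; [lia|exact I].
intros N. assert (E : exists c, infs (fun n => Sq x0 enc u k n /\ forall g, enc g = k -> u n g = c)).
{ destruct (classic (exists g0, enc g0 = k)) as [[g0 Hg0]|Hne].
  - destruct (pigeon_inf lx (Sq x0 enc u k) (fun n => u n g0) IHk) as [c Hc]. auto.
    exists c. intros M. destruct (Hc M) as [n [Hn [Sn E]]]. exists n; split; auto; split; auto.
    intros g Hg. rewrite (Hinj g g0) by congruence. auto.
  - exists x0. intros M. destruct (IHk M) as [n [Hn Sn]]. exists n; split; auto; split; auto.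
    intros g Hg; exfalso; apply Hne; eauto. }
pose proof (epsilon_spec (inhabits x0) _ E) as Hs. fold (cv x0 enc u k) in Hs.
destruct (Hs N) as [n [Hn Sn]]. exists n; split; [auto|exact Sn]. Qed.

Definition wlim {X G : Type} (x0 : X) (enc : G -> nat) (u : nat -> G -> X) (g : G) : X := cv x0 enc u (enc g).

Lemma Sq_agree {X G : Type} (x0 : X) (enc : G -> nat) (u : nat -> G -> X) K n :
  Sq x0 enc u K n -> forall g, enc g < K -> u n g = wlim x0 enc u g.
Proof. induction K; intros H g Hg. lia. apply Sq_S in H as [H1 H2].
destruct (Nat.eq_dec (enc g) K). unfold wlim; rewrite e; auto. apply IHK; auto; lia. Qed.

Lemma cluster (X G : Type) (lx : list X) (Hlx : forall a : X, In a lx) (x0 : X)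
  (enc : G -> nat) (Hinj : forall a b, enc a = enc b -> a = b) (u : nat -> G -> X) :
  exists w : G -> X, forall K N, exists n, N <= n /\ forall g, enc g < K -> u n g = w g.
Proof. exists (wlim x0 enc u). intros K N. destruct (Sq_inf X G lx Hlx x0 enc Hinj u K N) as [n [Hn Sn]].
exists n; split; auto. apply Sq_agree; auto. Qed.

Open Scope R_scope.

Lemma fchoice {A B : Type} (P : A -> B -> Prop) : (forall a, exists b, P a b) -> exists f, forall a, P a (f a).
Proof. intros H. exists (fun a => proj1_sig (constructive_indefinite_description _ (H a))).
intros a. exact (proj2_sig (constructive_indefinite_description _ (H a))). Qed.

Lemma unif1 (X G : Type) (lx : list X) (Hlx : forall a : X, In a lx) (x0 : X)
  (enc : G -> nat) (Hinj : forall a b, enc a = enc b -> a = b)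
  (d : (G -> X) -> (G -> X) -> R) (Hd : is_metric d) (Hdc : compatible_product_metric d) :
  forall eps, 0 < eps -> exists n0, forall u v, (forall g, (enc g < n0)%nat -> u g = v g) -> d u v < eps.
Proof. intros eps He. apply NNPP; intros Hn.
assert (H1 : forall n0 : nat, exists p : (G -> X) * (G -> X), (forall g, (enc g < n0)%nat -> fst p g = snd p g) /\ ~ d (fst p) (snd p) < eps).
{ intros n0. apply NNPP; intros Hq. apply Hn. exists n0. intros u v Huv. apply NNPP; intros Hl.
  apply Hq. exists (u, v); simpl; auto. }
destruct (fchoice _ H1) as [P HP].
destruct (cluster X G lx Hlx x0 enc Hinj (fun n => fst (P n))) as [w Hw].
destruct Hdc as [Hc1 _]. destruct (Hc1 w (eps/2) ltac:(lra)) as [F HF].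
destruct (list_bound enc F) as [K HK]. destruct (Hw K K) as [n [Hnn Hag]].
destruct (HP n) as [Hpq Hnd]. apply Hnd.
destruct Hd as [_ [_ [Hsym Htri]]].
assert (d w (fst (P n)) < eps/2) by (apply HF; intros g Hg; apply Hag; auto).
assert (d w (snd (P n)) < eps/2).
{ apply HF; intros g Hg. rewrite <- Hpq. apply Hag; auto. specialize (HK g Hg); lia. }
pose proof (Htri (fst (P n)) w (snd (P n))). rewrite (Hsym (fst (P n)) w) in H2. lra. Qed.

Lemma unif2 (X G : Type) (lx : list X) (Hlx : forall a : X, In a lx) (x0 : X)
  (enc : G -> nat) (Hinj : forall a b, enc a = enc b -> a = b)
  (d : (G -> X) -> (G -> X) -> R) (Hd : is_metric d) (Hdc : compatible_product_metric d) :
  forall g, exists delta, 0 < delta /\ forall u v, d u v < delta -> u g = v g.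
Proof. intros g. apply NNPP; intros Hn.
assert (H1 : forall n : nat, exists p : (G -> X) * (G -> X), d (fst p) (snd p) < / INR (S n) /\ fst p g <> snd p g).
{ intros n. apply NNPP; intros Hq. apply Hn. exists (/ INR (S n)). split.
  apply Rinv_0_lt_compat, lt_0_INR; lia.
  intros u v Huv. apply NNPP; intros Hl. apply Hq. exists (u, v); simpl; auto. }
destruct (fchoice _ H1) as [P HP].
destruct (cluster X G lx Hlx x0 enc Hinj (fun n => fst (P n))) as [w Hw].
destruct Hdc as [Hc1 Hc2]. destruct (Hc2 w g) as [del [Hdel Hdg]].
destruct (Hc1 w (del/2) ltac:(lra)) as [F HF].
destruct (list_bound enc F) as [K HK].
destruct (nfloor_ex (2 / del)) as [N1 HN1]. { apply Rlt_le, Rdiv_lt_0_compat; lra. }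
destruct (Hw K N1) as [n [Hnn Hag]].
destruct (HP n) as [Hpq Hnd]. apply Hnd.
destruct Hd as [_ [_ [Hsym Htri]]].
assert (A1 : d w (fst (P n)) < del/2) by (apply HF; intros g' Hg; apply Hag; auto).
assert (A2 : / INR (S n) < del / 2).
{ apply le_INR in Hnn. rewrite S_INR.
  assert (2 / del < INR n + 1) by lra.
  apply (Rmult_lt_compat_l del) in H; [|lra]. unfold Rdiv in H.
  rewrite <- Rmult_assoc, (Rmult_comm del 2), Rmult_assoc, Rinv_r in H by lra.
  apply Rmult_lt_reg_l with (INR n + 1). pose proof (pos_INR n); lra.
  rewrite Rinv_r by (pose proof (pos_INR n); lra). lra. }
pose proof (Htri w (fst (P n)) (snd (P n))).
rewrite (Hdg (fst (P n))) by lra. rewrite (Hdg (snd (P n))) by lra. reflexivity. Qed.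


Close Scope R_scope.
Open Scope nat_scope.
Open Scope nat_scope.

Lemma qp_per {G} (phi : G -> G) g : quasi_periodic phi g ->
  exists N0 p, 0 < p /\ forall i, N0 <= i -> Nat.iter (i + p) phi g = Nat.iter i phi g.
Proof. intros [l Hl]. destruct (pigeon (fun n => Nat.iter n phi g) l) as [a [b [Hab E]]].
{ intros i. apply Hl. eauto. }
exists a, (b - a). split. lia. intros i Hi.
replace (i + (b - a)) with ((i - a) + b) by lia. rewrite Nat.iter_add, <- E, <- Nat.iter_add.
f_equal; lia. Qed.

Lemma nqp_inj {G} (phi : G -> G) th : ~ quasi_periodic phi th ->
  forall a b, Nat.iter a phi th = Nat.iter b phi th -> a = b.
Proof. intros Hn.
assert (K : forall a b, a < b -> Nat.iter a phi th = Nat.iter b phi th -> False).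
{ intros a b Hab E. apply Hn. exists (pref (fun i => Nat.iter i phi th) b).
  intros z [n ->]. induction n as [n IH] using lt_wf_ind.
  destruct (Nat.lt_ge_cases n b).
  - clear IH. induction b. lia. simpl. destruct (Nat.eq_dec n b). left; subst; auto.
    right. assert (exists j, j < b /\ Nat.iter j phi th = Nat.iter n phi th) as [j [Hj Ej]] by (exists n; split; [lia|auto]).
    clear -H n0 Hj Ej. revert Ej. generalize (Nat.iter n phi th). intros z Ej. subst z.
    clear n n0 H. induction b. lia. simpl. destruct (Nat.eq_dec j b). left; subst; auto. right; apply IHb; lia.
  - replace n with ((n - b) + b) by lia. rewrite Nat.iter_add, <- E, <- Nat.iter_add.
    apply IH. lia. }
intros a b E. destruct (Nat.lt_total a b) as [H|[H|H]]; auto; exfalso; eauto. Qed.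

Lemma fact_ge n : n <= fact n.
Proof. induction n. simpl; lia. rewrite fact_simpl. pose proof (lt_O_fact n). nia. Qed.

Lemma cantor (h : (nat -> bool) -> nat) : (forall a b, h a = h b -> a = b) -> False.
Proof. intros Hi.
set (g := fun n => epsilon (inhabits (fun _ : nat => false)) (fun a => h a = n)).
set (diag := fun k => negb (g k k)).
assert (E : g (h diag) = diag).
{ apply Hi. unfold g. apply (epsilon_spec (inhabits (fun _ : nat => false)) (fun a => h a = h diag)). eauto. }
assert (diag (h diag) = negb (g (h diag) (h diag))) by reflexivity.
rewrite E in H. destruct (diag (h diag)); discriminate. Qed.

Lemma fin_count {T} (A : T -> Prop) : set_finite A -> set_countable A.
Proof. intros [l Hl].
exists (fun x => epsilon (inhabits 0) (fun i => nth_error l i = Some x)).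
intros a b Ha Hb E.
assert (Ea := epsilon_spec (inhabits 0) (fun i => nth_error l i = Some a) (In_nth_error _ _ (Hl a Ha))).
assert (Eb := epsilon_spec (inhabits 0) (fun i => nth_error l i = Some b) (In_nth_error _ _ (Hl b Hb))).
simpl in Ea, Eb. rewrite E in Ea. congruence. Qed.

Lemma unc_inf {T} (A : T -> Prop) : set_uncountable A -> set_infinite A.
Proof. intros H Hf. apply H, fin_count, Hf. Qed.

Open Scope R_scope.

Lemma pair12 {Y} (d : Y -> Y -> R) f x y : DC_pair1 d f x y -> DC_pair2 d f x y.
Proof. intros [[s [Hs E]] H]. split; auto. exists s; split; auto. rewrite E; simpl; lra. Qed.

Lemma scr12 {Y} (d : Y -> Y -> R) f A : DC_scrambled1 d f A -> DC_scrambled2 d f A.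
Proof. intros [H1 H2]; split; auto. intros; apply pair12; auto. Qed.

Lemma inf_two {T} (A : T -> Prop) : set_infinite A -> set_two_elements A.
Proof. intros H. apply NNPP; intros Hn. apply H.
destruct (classic (exists x, A x)) as [[x Hx]|Hne].
- exists (x :: nil). intros y Hy. left. apply NNPP; intros Hxy. apply Hn. exists x, y; auto.
- exists nil. intros y Hy; apply Hne; eauto. Qed.


Close Scope R_scope.
Open Scope nat_scope.
Open Scope R_scope.

Lemma ge_div a c m : 0 < m -> a * m <= c -> a <= c / m.
Proof. intros Hm H. unfold Rdiv. apply Rmult_le_reg_r with m; auto.
rewrite Rmult_assoc, Rinv_l by lra. lra. Qed.

Lemma le_div a c m : 0 < m -> c <= a * m -> c / m <= a.
Proof. intros Hm H. unfold Rdiv. apply Rmult_le_reg_r with m; auto.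
rewrite Rmult_assoc, Rinv_l by lra. lra. Qed.

Lemma lt_div a c m : 0 < m -> a * m < c -> a < c / m.
Proof. intros Hm H. unfold Rdiv. apply Rmult_lt_reg_r with m; auto.
rewrite Rmult_assoc, Rinv_l by lra. lra. Qed.

Lemma div_lt a c m : 0 < m -> c < a * m -> c / m < a.
Proof. intros Hm H. unfold Rdiv. apply Rmult_lt_reg_r with m; auto.
rewrite Rmult_assoc, Rinv_l by lra. lra. Qed.

Lemma lt_of_div a c e : 0 < e -> a / e < c -> a < e * c.
Proof. intros He H. replace a with ((a / e) * e) by (field; lra).
rewrite Rmult_comm. apply Rmult_lt_compat_l; auto. Qed.

Lemma per_bound (p c m : nat) : (0 < p)%nat -> (0 < m)%nat ->
  (2*p*c <= (2*p-1)*m)%nat -> INR c / INR m <= 1 - / (2 * INR p).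
Proof. intros Hp Hm H. apply le_INR in H.
rewrite !mult_INR, minus_INR, mult_INR in H by lia. simpl in H.
assert (0 < INR p) by (apply lt_0_INR; auto). assert (0 < INR m) by (apply lt_0_INR; auto).
apply le_div; auto.
apply Rmult_le_reg_l with (2*INR p). lra.
replace (2*INR p*((1 - /(2*INR p))*INR m)) with ((2*INR p-1)*INR m) by (field; lra). lra. Qed.

Lemma INR_Spos n : 0 < INR (S n).
Proof. apply lt_0_INR; lia. Qed.

Lemma dc22_nqp (X G : Type) (lx : list X) (Hlx : forall a : X, In a lx) (x0 : X)
  (enc : G -> nat) (Hinj : forall a b, enc a = enc b -> a = b) (phi : G -> G)
  (d : (G -> X) -> (G -> X) -> R) (Hd : is_metric d) (Hdc : compatible_product_metric d) :
  DC22 d (gen_shift phi) -> has_non_quasi_periodic phi.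
Proof.
intros [A [[x [y [Ax [Ay Hxy]]]] HA]]. destruct (HA x y Ax Ay Hxy) as [[s0 [Hs0 Hlow]] Hup].
apply NNPP; intros Hnq.
assert (Hqp : forall g, quasi_periodic phi g) by (intros g; apply NNPP; intros H; apply Hnq; exists g; auto).
set (f := gen_shift phi) in *.
destruct (classic (forall g, exists N, forall i, (N <= i)%nat -> x (Nat.iter i phi g) = y (Nat.iter i phi g))) as [HA'|HB].
- destruct (unif1 X G lx Hlx x0 enc Hinj d Hd Hdc s0 Hs0) as [n0 Hn0].
  destruct (list_below enc Hinj n0) as [l Hl].
  assert (HN : exists N, forall g, In g l -> forall i, (N <= i)%nat -> x (Nat.iter i phi g) = y (Nat.iter i phi g)).
  { clear Hl. induction l as [|g l [N HN]]. exists O; intros g [].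
    destruct (HA' g) as [N' HN']. exists (Nat.max N N').
    intros g' [<-|Hg] i Hi. apply HN'; lia. apply HN; auto; lia. }
  destruct HN as [N HN].
  assert (Hgood : forall i, (N <= i)%nat -> d (Nat.iter i f x) (Nat.iter i f y) < s0).
  { intros i Hi. apply Hn0. intros g Hg. unfold f; rewrite !iter_shift. apply HN; auto. }
  assert (Hle : forall e, 0 < e -> Rbar_le (1 - e) (F_low d f x y s0)).
  { intros e He. unfold F_low. rewrite <- (LimInf_seq_const (1 - e)).
    apply LimInf_le. destruct (nfloor_ex (INR N / e)) as [M HM].
    { apply Rmult_le_pos; [apply pos_INR | left; apply Rinv_0_lt_compat; auto]. }
    exists (Nat.max M N). intros n Hn. rewrite xi_cnt.
    set (b := fun i => if Rlt_dec _ _ then true else false).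
    assert (Hc : (S n - N <= cnt b (S n))%nat).
    { apply cnt_good. lia. intros i Hi. unfold b. destruct (Rlt_dec _ _); auto.
      exfalso; apply n1, Hgood; lia. }
    apply ge_div. apply INR_Spos. apply le_INR in Hc. rewrite minus_INR in Hc by lia.
    assert (INR N / e < INR (S n)).
    { rewrite S_INR. apply le_INR in Hn. pose proof (le_INR _ _ (Nat.le_max_l M N)). lra. }
    apply lt_of_div in H; auto. lra. }
  revert Hle Hlow. destruct (F_low d f x y s0) as [m| |]; simpl; intros Hle Hlow.
  + specialize (Hle ((1-m)/2) ltac:(lra)). simpl in Hle. lra.
  + exact Hlow.
  + exact (Hle 1 ltac:(lra)).
- assert (HB' : exists g, forall N, exists i, (N <= i)%nat /\ x (Nat.iter i phi g) <> y (Nat.iter i phi g)).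
  { apply NNPP; intros H1. apply HB. intros g. apply NNPP; intros H2. apply H1. exists g.
    intros N. apply NNPP; intros H3. apply H2. exists N. intros i Hi. apply NNPP; intros H4.
    apply H3. eauto. }
  destruct HB' as [g Hbad].
  destruct (qp_per phi g (Hqp g)) as [N0 [p [Hp Hper]]].
  destruct (Hbad N0) as [i0 [Hi0 Hne]].
  destruct (unif2 X G lx Hlx x0 enc Hinj d Hd Hdc g) as [del [Hdel Hdg]].
  set (b := fun i => if Rlt_dec (d (Nat.iter i f x) (Nat.iter i f y)) del then true else false).
  assert (Hdis : forall i, x (Nat.iter i phi g) <> y (Nat.iter i phi g) -> b i = false).
  { intros i Hi. unfold b. destruct (Rlt_dec _ _) as [r|r]; auto. exfalso; apply Hi.
    specialize (Hdg _ _ r). unfold f in Hdg; rewrite !iter_shift in Hdg; auto. }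
  assert (Hwin : forall r, exists i, (i0 + r <= i < i0 + r + p)%nat /\ (N0 <= i)%nat /\ x (Nat.iter i phi g) <> y (Nat.iter i phi g)).
  { induction r. exists i0. repeat split; auto; lia.
    destruct IHr as [i [[H1 H2] [H3 H4]]]. destruct (Nat.eq_dec i (i0 + r)).
    - exists (i + p)%nat. repeat split; try lia. rewrite Hper by lia. auto.
    - exists i. repeat split; auto; lia. }
  assert (Hw' : forall w, (i0 <= w)%nat -> exists i, (w <= i < w + p)%nat /\ b i = false).
  { intros w Hw. destruct (Hwin (w - i0)%nat) as [i [H1 [_ H3]]]. exists i. split. lia. auto. }
  pose proof (cnt_periodic b i0 p Hp Hw') as Hcp.
  assert (Hle : Rbar_le (F_up d f x y del) (1 - / (2 * INR p))).
  { unfold F_up. rewrite <- (LimSup_seq_const (1 - / (2 * INR p))). apply LimSup_le.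
    exists (2 * i0 + 2 * p)%nat. intros n Hn. rewrite xi_cnt.
    change (INR (cnt b (S n)) / INR (S n) <= 1 - / (2 * INR p)).
    apply per_bound; auto. lia. specialize (Hcp (S n - i0)%nat).
    replace (i0 + (S n - i0))%nat with (S n) in Hcp by lia. nia. }
  rewrite (Hup del Hdel) in Hle. simpl in Hle.
  assert (0 < INR p) by (apply lt_0_INR; auto).
  assert (0 < / (2 * INR p)) by (apply Rinv_0_lt_compat; lra). lra.
Qed.


Close Scope R_scope.
Open Scope nat_scope.
Open Scope nat_scope.

Definition jfun k := k - Nat.sqrt k * Nat.sqrt k.

Lemma jfun_surj j N : exists k, N <= k /\ jfun k = j.
Proof. set (n := Nat.max N j). exists (n * n + j). split. nia.
unfold jfun. rewrite (Nat.sqrt_unique (n * n + j) n). lia. nia. Qed.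

Lemma blocks_unique k k' m : fact (2*k+1) <= m < fact (2*k+2) ->
  fact (2*k'+1) <= m < fact (2*k'+2) -> k = k'.
Proof. intros H1 H2. destruct (Nat.lt_total k k') as [H|[H|H]]; auto; exfalso.
- pose proof (fact_le (2*k+2) (2*k'+1) ltac:(lia)). lia.
- pose proof (fact_le (2*k'+2) (2*k+1) ltac:(lia)). lia. Qed.

Lemma even_not_odd k k' m : fact (2*k) <= m < fact (2*k+1) ->
  fact (2*k'+1) <= m < fact (2*k'+2) -> False.
Proof. intros H1 H2. destruct (Nat.le_gt_cases k k').
- pose proof (fact_le (2*k+1) (2*k'+1) ltac:(lia)). lia.
- pose proof (fact_le (2*k'+2) (2*k) ltac:(lia)). lia. Qed.

Definition Qb (al : nat -> bool) m := exists k, fact (2*k+1) <= m < fact (2*k+2) /\ al (jfun k) = true.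

Definition xa {X G : Type} (phi : G -> G) (th : G) (a0 b0 : X) (al : nat -> bool) (g : G) : X :=
  if excluded_middle_informative (exists m, g = Nat.iter m phi th /\ Qb al m) then b0 else a0.

Lemma xa_b {X G : Type} phi th (a0 b0 : X) al m : Qb al m -> @xa X G phi th a0 b0 al (Nat.iter m phi th) = b0.
Proof. intros H. unfold xa. destruct (excluded_middle_informative _) as [_|n]; auto.
exfalso; apply n; eauto. Qed.

Lemma xa_a {X G : Type} phi th (a0 b0 : X) al z : ~ (exists m, z = Nat.iter m phi th /\ Qb al m) ->
  @xa X G phi th a0 b0 al z = a0.
Proof. intros H. unfold xa. destruct (excluded_middle_informative _); tauto. Qed.

Lemma xa_diff {X G : Type} phi th (a0 b0 : X) (Hab : a0 <> b0)
  (Hinj : forall a b, Nat.iter a phi th = Nat.iter b phi th -> a = b) al be j k m :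
  al j <> be j -> jfun k = j -> fact (2*k+1) <= m < fact (2*k+2) ->
  @xa X G phi th a0 b0 al (Nat.iter m phi th) <> xa phi th a0 b0 be (Nat.iter m phi th).
Proof.
assert (K : forall al be, al j = true -> be j = false -> jfun k = j -> fact (2*k+1) <= m < fact (2*k+2) ->
  @xa X G phi th a0 b0 al (Nat.iter m phi th) <> xa phi th a0 b0 be (Nat.iter m phi th)).
{ clear al be. intros al be Ha Hb Hk Hm. rewrite xa_b. rewrite xa_a. auto.
  intros [m' [E [k' [Hk' Hbk]]]]. apply Hinj in E. subst m'.
  rewrite (blocks_unique k k' m) in Hk by auto. congruence.
  exists k. split; auto. congruence. }
intros Hne Hk Hm. destruct (al j) eqn:Ea; destruct (be j) eqn:Eb; try congruence.
apply K; auto. intros E; symmetry in E; revert E; apply K; auto. Qed.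

Lemma orbit_bounds {G} (phi : G -> G) th (Hinj : forall a b, Nat.iter a phi th = Nat.iter b phi th -> a = b)
  (l : list G) : exists A B, forall g, In g l -> forall i m, Nat.iter i phi g = Nat.iter m phi th ->
  i <= m + A /\ m <= i + B.
Proof.
assert (H1 : forall g, exists A B, forall i m, Nat.iter i phi g = Nat.iter m phi th -> i <= m + A /\ m <= i + B).
{ intros g. destruct (classic (exists i0 m0, Nat.iter i0 phi g = Nat.iter m0 phi th)) as [[i0 [m0 E0]]|Hn].
  - exists i0, m0. intros i m E. destruct (Nat.le_gt_cases i i0).
    + assert (Nat.iter ((i0 - i) + m) phi th = Nat.iter m0 phi th).
      { rewrite Nat.iter_add, <- E, <- Nat.iter_add, <- E0. f_equal. lia. }
      apply Hinj in H0. lia.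
    + assert (Nat.iter ((i - i0) + m0) phi th = Nat.iter m phi th).
      { rewrite Nat.iter_add, <- E0, <- Nat.iter_add, <- E. f_equal. lia. }
      apply Hinj in H0. lia.
  - exists 0, 0. intros i m E. exfalso; eauto. }
induction l as [|g l [A [B HAB]]]. exists 0, 0. intros g [].
destruct (H1 g) as [A' [B' H']]. exists (Nat.max A A'), (Nat.max B B').
intros g' [<-|Hg] i m E. specialize (H' i m E). lia. specialize (HAB g' Hg i m E). lia. Qed.

Open Scope R_scope.

Lemma low_real (c F : nat) T eps : (c <= F)%nat -> 0 < eps -> / eps < T ->
  INR c / (T * INR F) < eps.
Proof. intros Hc He HT. apply le_INR in Hc.
destruct (Nat.eq_dec F 0) as [->|HF].
- simpl in *. rewrite Rmult_0_r. unfold Rdiv. rewrite Rinv_0. lra.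
- assert (0 < INR F) by (apply lt_0_INR; lia).
  assert (1 < eps * T). { replace (/ eps) with (1 / eps) in HT by (field; lra). apply lt_of_div in HT; auto. }
  apply div_lt. assert (0 < T) by (apply Rinv_0_lt_compat in He; lra). nra. nra. Qed.

Lemma up_real (c F0 A B : nat) T eps : 0 < eps -> (1 <= F0)%nat ->
  INR (1 + A + B) / eps < T ->
  T * INR F0 - INR F0 - INR A - INR B <= INR c ->
  1 - eps < INR c / (T * INR F0).
Proof. intros He HF HT Hc. apply le_INR in HF. simpl in HF.
rewrite !plus_INR in HT. simpl in HT. apply lt_of_div in HT; auto.
pose proof (pos_INR A). pose proof (pos_INR B).
assert (0 < T) by nra.
apply lt_div. nra. nra. Qed.


Close Scope R_scope.
Open Scope nat_scope.
Open Scope R_scope.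

Lemma u_nonneg (b : nat -> bool) n : 0 <= INR (cnt b (S n)) / INR (S n).
Proof. apply Rmult_le_pos. apply pos_INR. left; apply Rinv_0_lt_compat, INR_Spos. Qed.

Lemma u_le1 (b : nat -> bool) n : INR (cnt b (S n)) / INR (S n) <= 1.
Proof. apply le_div. apply INR_Spos. rewrite Rmult_1_l. apply le_INR, cnt_le. Qed.

Lemma nqp_uniform (X G : Type) (lx : list X) (Hlx : forall a : X, In a lx) (x0 : X)
  (enc : G -> nat) (Hinj : forall a b, enc a = enc b -> a = b) (phi : G -> G)
  (a0 b0 : X) (Hab : a0 <> b0)
  (d : (G -> X) -> (G -> X) -> R) (Hd : is_metric d) (Hdc : compatible_product_metric d) :
  has_non_quasi_periodic phi -> uniform_DC d (gen_shift phi).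
Proof.
intros [th Hth]. pose proof (nqp_inj phi th Hth) as Hthi.
set (f := gen_shift phi).
destruct (unif2 X G lx Hlx x0 enc Hinj d Hd Hdc th) as [del [Hdel Hdg]].
set (xx := xa phi th a0 b0).
assert (Plow : forall al be j, al j <> be j -> F_low d f (xx al) (xx be) del = 0).
{ intros al be j Hj. unfold F_low. apply is_LimInf_seq_unique. intros eps. split.
  - intros N. destruct (nfloor_ex (/ eps)) as [K0 HK0].
    { left; apply Rinv_0_lt_compat, cond_pos. }
    destruct (jfun_surj j (Nat.max N K0)) as [k [Hk Hjk]].
    pose proof (fact_ge (2*k+2)).
    exists (fact (2*k+2) - 1)%nat. split. lia.
    replace (S (fact (2*k+2) - 1)) with (fact (2*k+2)) by lia.
    rewrite xi_cnt.
    set (b := fun i => if Rlt_dec _ _ then true else false).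
    assert (Hc : (cnt b (fact (2*k+2)) <= fact (2*k+1))%nat).
    { pose proof (cnt_bad_run b (fact (2*k+1)) (fact (2*k+2) - fact (2*k+1))) as E.
      pose proof (fact_le (2*k+1) (2*k+2) ltac:(lia)).
      replace (fact (2 * k + 1) + (fact (2 * k + 2) - fact (2 * k + 1)))%nat with (fact (2*k+2)) in E by lia.
      rewrite E. apply cnt_le. intros i Hi. unfold b. destruct (Rlt_dec _ _) as [r|r]; auto.
      exfalso. apply (xa_diff phi th a0 b0 Hab Hthi al be j k i Hj Hjk). lia.
      specialize (Hdg _ _ r). unfold f in Hdg. rewrite !iter_shift in Hdg. exact Hdg. }
    set (c := cnt b (fact (2*k+2))) in *.
    replace (2*k+2)%nat with (S (2*k+1)) by lia. rewrite fact_simpl, mult_INR.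
    rewrite Rplus_0_l. apply low_real. auto.
    apply cond_pos. pose proof (le_INR _ _ (Nat.le_max_r N K0)).
    rewrite S_INR. pose proof (le_INR (Nat.max N K0) (2*k+1) ltac:(lia)). lra.
  - exists O. intros n _. rewrite xi_cnt. pose proof (u_nonneg (fun i => if Rlt_dec (d (Nat.iter i f (xx al)) (Nat.iter i f (xx be))) del then true else false) n).
    pose proof (cond_pos eps). lra. }
assert (Pup : forall al be s, 0 < s -> F_up d f (xx al) (xx be) s = 1).
{ intros al be s Hs. destruct (unif1 X G lx Hlx x0 enc Hinj d Hd Hdc s Hs) as [n0 Hn0].
  destruct (list_below enc Hinj n0) as [l Hl].
  destruct (orbit_bounds phi th Hthi l) as [A [B HAB]].
  unfold F_up. apply is_LimSup_seq_unique. intros eps. split.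
  - intros N. destruct (nfloor_ex (INR (1 + A + B) / eps)) as [K0 HK0].
    { apply Rmult_le_pos. apply pos_INR. left; apply Rinv_0_lt_compat, cond_pos. }
    set (k := Nat.max N K0).
    pose proof (fact_ge (2*k+1)).
    exists (fact (2*k+1) - 1)%nat. split. lia.
    replace (S (fact (2*k+1) - 1)) with (fact (2*k+1)) by lia.
    rewrite xi_cnt.
    set (b := fun i => if Rlt_dec _ _ then true else false).
    assert (Hgood : forall i, (fact (2*k) + A <= i < fact (2*k+1) - B)%nat -> b i = true).
    { intros i Hi. unfold b. destruct (Rlt_dec _ _) as [r|r]; auto. exfalso; apply r.
      apply Hn0. intros g Hg. unfold f. rewrite !iter_shift. unfold xx.
      assert (Hno : forall ga, ~ (exists m, Nat.iter i phi g = Nat.iter m phi th /\ Qb ga m)).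
      { intros ga [m [E [k' [Hk' _]]]]. destruct (HAB g (Hl g Hg) i m E).
        apply (even_not_odd k k' m); auto. lia. }
      rewrite !xa_a by apply Hno. reflexivity. }
    pose proof (lt_O_fact (2*k)) as HF0.
    assert (Hc : INR (fact (2*k+1)) - INR (fact (2*k)) - INR A - INR B <= INR (cnt b (fact (2*k+1)))).
    { destruct (le_lt_dec (fact (2*k) + A) (fact (2*k+1) - B)).
      - pose proof (cnt_good b (fact (2*k) + A) (fact (2*k+1) - B) (fact (2*k+1)) ltac:(lia) Hgood).
        apply le_INR in H0. rewrite minus_INR, minus_INR, plus_INR in H0 by lia. lra.
      - assert (fact (2*k+1) < fact (2*k) + A + B)%nat by lia. apply lt_INR in H0.
        rewrite !plus_INR in H0. pose proof (pos_INR (cnt b (fact (2*k+1)))). lra. }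
    set (c := cnt b (fact (2*k+1))) in *.
    replace (2*k+1)%nat with (S (2*k)) in Hc |- * by lia. rewrite fact_simpl, mult_INR in Hc |- *.
    apply up_real with A B. apply cond_pos. lia.
    rewrite S_INR. pose proof (le_INR _ _ (Nat.le_max_r N K0)). fold k in H0.
    pose proof (le_INR k (2*k) ltac:(lia)). lra. exact Hc.
  - exists O. intros n _. rewrite xi_cnt. pose proof (u_le1 (fun i => if Rlt_dec (d (Nat.iter i f (xx al)) (Nat.iter i f (xx be))) s then true else false) n).
    pose proof (cond_pos eps). lra. }
assert (Hxinj : forall al be, xx al = xx be -> al = be).
{ intros al be E. apply functional_extensionality. intros j. apply NNPP; intros Hne.
  destruct (jfun_surj j 0) as [k [_ Hk]].
  apply (xa_diff phi th a0 b0 Hab Hthi al be j k (fact (2*k+1)) Hne Hk).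
  pose proof (fact_le (2*k+1) (2*k+2) ltac:(lia)). split. lia.
  replace (2*k+2)%nat with (S (2*k+1)) by lia. rewrite fact_simpl. pose proof (lt_O_fact (2*k+1)). lia.
  fold xx. rewrite E. reflexivity. }
assert (Hpair : forall x y, (exists al, x = xx al) -> (exists be, y = xx be) -> x <> y ->
   F_low d f x y del = 0 /\ DC_pair1 d f x y).
{ intros x y [al ->] [be ->] Hne.
  assert (exists j, al j <> be j) as [j Hj].
  { apply NNPP; intros H. apply Hne. f_equal. apply functional_extensionality. intros j.
    apply NNPP; intros H'. apply H; eauto. }
  split. eauto. split. exists del; split; eauto. intros s Hs; apply Pup; auto. }
exists (fun z => exists al, z = xx al). split; [|split].
- intros [h Hh]. apply (cantor (fun al => h (xx al))). intros al be E.
  apply Hxinj. apply Hh; eauto.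
- split. exists (xx (fun _ => false)), (xx (fun _ => true)). split; [eauto|split; [eauto|]].
  intros E. apply Hxinj in E. assert (false = true) by (change ((fun _ : nat => false) 0%nat = (fun _ : nat => true) 0%nat); rewrite E; reflexivity). discriminate.
  intros x y Hx Hy Hne. apply Hpair; auto.
- exists del. split; auto. intros x y Hx Hy Hne. apply Hpair; auto.
Qed.


Open Scope R_scope.

Theorem theorem3p5 (X G : Type)
  (HXfin : finite_type X) (HX2 : exists a b : X, a <> b)
  (HGcount : countable_type G) (HGne : inhabited G)
  (phi : G -> G) (d : (G -> X) -> (G -> X) -> R)
  (Hd : is_metric d) (Hdc : compatible_product_metric d) :
  let f := gen_shift phi in
  (has_non_quasi_periodic phi <-> uniform_DC d f) /\
  (has_non_quasi_periodic phi <-> DCu1 d f) /\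
  (has_non_quasi_periodic phi <-> DCinf1 d f) /\
  (has_non_quasi_periodic phi <-> DC21 d f) /\
  (has_non_quasi_periodic phi <-> DCu2 d f) /\
  (has_non_quasi_periodic phi <-> DCinf2 d f) /\
  (has_non_quasi_periodic phi <-> DC22 d f).
Proof.
intros f.
destruct HXfin as [lx Hlx]. destruct HX2 as [a0 [b0 Hab]]. destruct HGcount as [enc Hinj].
assert (H1 : has_non_quasi_periodic phi -> uniform_DC d f)
  by exact (nqp_uniform X G lx Hlx a0 enc Hinj phi a0 b0 Hab d Hd Hdc).
assert (H2 : DC22 d f -> has_non_quasi_periodic phi)
  by exact (dc22_nqp X G lx Hlx a0 enc Hinj phi d Hd Hdc).
assert (U1 : uniform_DC d f -> DCu1 d f) by (intros [A [HA [HS _]]]; exists A; auto).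
assert (U2 : DCu1 d f -> DCinf1 d f) by (intros [A [HA HS]]; exists A; split; auto; apply unc_inf; auto).
assert (U3 : DCinf1 d f -> DC21 d f) by (intros [A [HA HS]]; exists A; auto).
assert (U4 : DC21 d f -> DC22 d f) by (intros [A HS]; exists A; apply scr12; auto).
assert (U5 : DCu1 d f -> DCu2 d f) by (intros [A [HA HS]]; exists A; split; auto; apply scr12; auto).
assert (U6 : DCu2 d f -> DCinf2 d f) by (intros [A [HA HS]]; exists A; split; auto; apply unc_inf; auto).
assert (U7 : DCinf2 d f -> DC22 d f) by (intros [A [HA HS]]; exists A; auto).
repeat split; tauto.
Qed.
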